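(* Let $R$ be a root system in $\mathbb{R}^N$ and let $R'=\{\alpha_1,\dots,\alpha_n\}$ be a positive orthogonal subsystem of $R$. For $i=1,\dots,n$ let $\tau_{\alpha_i}(x)=x-\frac{\langle x,\alpha_i\rangle}{|\alpha_i|^2}\alpha_i$ and define the operator $\rho_i$ on the space $\Pi^N$ of polynomial functions on $\mathbb{R}^N$ by $$(\rho_i f)(x)=\frac{f(x)-f(\tau_{\alpha_i}x)}{\langle x,\alpha_i\rangle}.$$ Then: (i) for all $i,j=1,\dots,n$, $[\rho_i,\rho_j]=\rho_i\rho_j-\rho_j\rho_i=0$; (ii) if $\alpha\in\mathbb{R}^N$ is orthogonal to $\alpha_i$, then $[\partial_\alpha,\rho_i]=0$, where $\partial_\alpha$ denotes the directional derivative in direction $\alpha$.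
   Context: $\langle\cdot,\cdot\rangle$ is the Euclidean inner product on $\mathbb{R}^N$ and $|x|=\sqrt{\langle x,x\rangle}$. A root system is a finite set $R\subset\mathbb{R}^N\setminus\{0\}$ with $s_\alpha(R)=R$ and $R\cap\mathbb{R}\alpha=\{\pm\alpha\}$ for all $\alpha\in R$, where $s_\alpha(x)=x-2\frac{\langle x,\alpha\rangle}{|\alpha|^2}\alpha$. A subsystem $R''$ of $R$ is a subset such that $\alpha\in R''\Rightarrow-\alpha\in R''$, and $\alpha,\beta\in R''$, $\alpha+\beta\in R\Rightarrow\alpha+\beta\in R''$; it is an orthogonal subsystem if its roots are pairwise orthogonal (apart from $\pm$ pairs). A positive orthogonal subsystem $R'$ is a subset of an orthogonal subsystem $R''$ with $R''=R'\cup(-R')$, $R'\cap(-R')=\emptyset$; so the elements of $R'$ are pairwise orthogonal. Each $\rho_i$ maps polynomials to polynomials. *)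

(* Defs.v *)
From HB Require Import structures.
From mathcomp Require Import all_boot all_order all_algebra.
From mathcomp Require Import mpoly.
From Stdlib Require Import ClassicalEpsilon.
Set Implicit Arguments. Unset Strict Implicit. Unset Printing Implicit Defensive.
Import Order.TTheory GRing.Theory Num.Theory.
Local Open Scope ring_scope.

Section Defs.
Variables (R : realFieldType) (N : nat).
Local Notation vec := 'rV[R]_N.

Definition dot (x y : vec) : R := \sum_(k < N) x 0 k * y 0 k.
Definition nrm2 (x : vec) : R := dot x x.

Definition refl (a x : vec) : vec := x - ((2 * dot x a) / nrm2 a) *: a.

Definition root_system (Rs : seq vec) : Prop :=
  [/\ 0 \notin Rs,
      (forall a b, a \in Rs -> b \in Rs -> refl a b \in Rs) &
      (forall a b, a \in Rs -> b \in Rs -> (exists c : R, b = c *: a) ->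
         b = a \/ b = - a)].

Definition subsystem (Rs S : seq vec) : Prop :=
  [/\ {subset S <= Rs},
      (forall a, a \in S -> - a \in S) &
      (forall a b, a \in S -> b \in S -> a + b \in Rs -> a + b \in S)].

Definition orthogonal_subsystem (Rs S : seq vec) : Prop :=
  subsystem Rs S /\
  (forall a b, a \in S -> b \in S -> b != a -> b != - a -> dot a b = 0).

Definition positive_orthogonal_subsystem (Rs : seq vec) (n : nat)
    (al : 'I_n -> vec) : Prop :=
  injective al /\
  exists S : seq vec, [/\ orthogonal_subsystem Rs S,
    (forall v, v \in S <-> (exists i, v = al i) \/ (exists i, v = - al i)) &
    (forall i j, al i <> - al j)].

Local Notation P := {mpoly R[N]}.

Definition linp (a : vec) : P := \sum_(k < N) a 0 k *: 'X_k.

(* tau_a as a tuple of coordinate polynomials: (tau_a x)_k = x_k - <x,a>/|a|^2 a_k *)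
Definition tau_tuple (a : vec) : N.-tuple P :=
  [tuple ('X_k - (a 0 k / nrm2 a) *: linp a) | k < N].

Definition comp_tau (a : vec) (f : P) : P := f \mPo tau_tuple a.

(* rho_a f = (f - f o tau_a) / <x, a>: the polynomial q with <x,a> q = f - f o tau_a *)
Definition rho (a : vec) (f : P) : P :=
  epsilon (inhabits 0) (fun q : P => linp a * q = f - comp_tau a f).

Definition dderiv (a : vec) (f : P) : P := \sum_(k < N) a 0 k *: mderiv k f.

End Defs.

(* Main.v *)
Require Import Defs.
From HB Require Import structures.
From mathcomp Require Import all_boot all_order all_algebra.
From mathcomp Require Import mpoly.
From mathcomp Require Import ring.
From Stdlib Require Import ClassicalEpsilon.
Import Order.TTheory GRing.Theory Num.Theory.
Local Open Scope ring_scope.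

Section S.
Variables (R : realFieldType) (N : nat).
Local Notation vec := 'rV[R]_N.
Local Notation P := {mpoly R[N]}.

Lemma mp_ind (Q : P -> Prop) : Q 1 -> (forall c p, Q p -> Q (c *: p)) ->
  (forall p q, Q p -> Q q -> Q (p + q)) -> (forall p q, Q p -> Q q -> Q (p * q)) ->
  (forall k, Q 'X_k) -> forall p, Q p.
Proof.
move=> H1 HZ HD HM HX; elim/mpolyind => [|c m p _ _ Hp].
  by rewrite -(scale0r 1); apply: HZ.
apply: HD => //; apply: HZ; rewrite mpolyXE_id; apply: big_ind => //.
move=> i _; elim: (m i) => [|k IH]; first by rewrite expr0.
by rewrite exprS; apply: HM.
Qed.

Lemma nrm2_neq0 (a : vec) : a != 0 -> nrm2 a != 0.
Proof.
move=> a0; apply: contra a0; rewrite /nrm2 /dot psumr_eq0 => [H|i _]; last by rewrite -expr2 sqr_ge0.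
apply/eqP/rowP => k; rewrite !mxE.
by have /allP/(_ k (mem_index_enum _)) := H; rewrite implyTb mulf_eq0 orbb => /eqP.
Qed.

Lemma linp_neq0 (a : vec) : a != 0 -> linp a != 0.
Proof.
move=> /nrm2_neq0; apply: contra => /eqP H.
have := congr1 (meval (fun k => a 0 k)) H.
rewrite meval0 /linp raddf_sum /= => <-; apply/eqP.
by rewrite /nrm2 /dot; apply: eq_bigr => k _; rewrite mevalZ mevalXU.
Qed.

Lemma tauX (a : vec) k : comp_tau a 'X_k = 'X_k - (a 0 k / nrm2 a) *: linp a.
Proof. by rewrite /comp_tau comp_mpolyXU -tnth_nth tnth_mktuple. Qed.

Lemma tau_linp (a b : vec) :
  comp_tau a (linp b) = linp b - (dot b a / nrm2 a) *: linp a.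
Proof.
rewrite {1}/linp /comp_tau raddf_sum /=.
under eq_bigr => k _ do rewrite comp_mpolyZ -/(comp_tau a _) tauX scalerBr scalerA.
rewrite sumrB -/(linp b); congr (_ - _).
rewrite -scaler_suml /dot mulr_suml; congr (_ *: _); apply: eq_bigr => k _; by rewrite mulrA.
Qed.

Lemma tauM (a : vec) f g : comp_tau a (f * g) = comp_tau a f * comp_tau a g.
Proof. exact: rmorphM. Qed.
Lemma tauD (a : vec) f g : comp_tau a (f + g) = comp_tau a f + comp_tau a g.
Proof. exact: comp_mpolyD. Qed.
Lemma tauB (a : vec) f g : comp_tau a (f - g) = comp_tau a f - comp_tau a g.
Proof. exact: comp_mpolyB. Qed.
Lemma tauZ (a : vec) c f : comp_tau a (c *: f) = c *: comp_tau a f.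
Proof. exact: comp_mpolyZ. Qed.
Lemma tau1 (a : vec) : comp_tau a 1 = 1.
Proof. exact: comp_mpoly1. Qed.

Lemma rho_ex (a : vec) f : exists q, linp a * q = f - comp_tau a f.
Proof.
elim/mp_ind: f => [|c p [q Hq]|p p' [q Hq] [q' Hq']|p p' [q Hq] [q' Hq']|k].
- by exists 0; rewrite tau1 mulr0 subrr.
- by exists (c *: q); rewrite tauZ -scalerAr Hq scalerBr.
- by exists (q + q'); rewrite tauD mulrDr Hq Hq'; ring.
- exists (p * q' + q * comp_tau a p').
  rewrite tauM mulrDr mulrCA Hq' mulrA Hq; ring.
- exists ((a 0 k / nrm2 a)%:MP); rewrite tauX opprB addrC subrK mulrC mul_mpolyC //.
Qed.

Lemma rho_spec (a : vec) f : linp a * rho a f = f - comp_tau a f.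
Proof.
rewrite /rho; apply: (epsilon_spec (inhabits (0:P)) (fun q : P => linp a * q = f - comp_tau a f)).
exact: rho_ex.
Qed.

Lemma rho_uniq (a : vec) f q : a != 0 -> linp a * q = f - comp_tau a f -> rho a f = q.
Proof. by move=> /linp_neq0 H Hq; apply: (mulfI H); rewrite rho_spec Hq. Qed.

Lemma dotC (a b : vec) : dot a b = dot b a.
Proof. by rewrite /dot; apply: eq_bigr => k _; rewrite mulrC. Qed.

Lemma tau_comm (a b : vec) f : dot a b = 0 ->
  comp_tau a (comp_tau b f) = comp_tau b (comp_tau a f).
Proof.
move=> ab; elim/mp_ind: f => [|c p Hp|p q Hp Hq|p q Hp Hq|k].
- by rewrite !tau1.
- by rewrite !tauZ Hp.
- by rewrite !tauD Hp Hq.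
- by rewrite !tauM Hp Hq.
- rewrite !tauX !tauB !tauZ !tauX !tau_linp ab dotC ab !mul0r !scale0r !subr0.
  by rewrite -!addrA [X in _ + X]addrC.
Qed.

Lemma aux4 (V : comRingType) (f A B C : V) : (f - B) - (A - C) = (f - A) - (B - C).
Proof. ring. Qed.

Lemma aux4' (f A B C : P) : (f - B) - (A - C) = (f - A) - (B - C).
Proof. ring. Qed.

Lemma rho2 (a b : vec) f : comp_tau a (linp b) = linp b ->
  linp b * (linp a * rho a (rho b f)) =
   (f - comp_tau b f) - (comp_tau a f - comp_tau a (comp_tau b f)).
Proof.
move=> Hb.
rewrite (rho_spec a (rho b f)) mulrBr -{2}Hb -(tauM a (linp b) (rho b f)) (rho_spec b f) (tauB a f).
reflexivity.
Qed.

Lemma cancelP (x y z : P) : x != 0 -> x * y = x * z -> y = z.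
Proof. move=> H E. apply: (mulfI H). Time exact: E. Qed.

Lemma rho_comm (a b : vec) f : a != 0 -> b != 0 -> dot a b = 0 ->
  rho a (rho b f) = rho b (rho a f).
Proof.
move=> a0 b0 ab; have Ha0 := linp_neq0 _ a0; have Hb0 := linp_neq0 _ b0.
have Hb : comp_tau a (linp b) = linp b.
  by rewrite tau_linp dotC ab mul0r scale0r subr0.
have Ha : comp_tau b (linp a) = linp a.
  by rewrite tau_linp ab mul0r scale0r subr0.
apply: (cancelP _ _ _ Ha0); apply: (cancelP _ _ _ Hb0).
rewrite [LHS](rho2 a b f Hb).
rewrite [RHS]mulrCA.
rewrite [RHS](rho2 b a f Ha).
rewrite (tau_comm a b f ab).
apply: aux4'.
Qed.

Lemma d0 (a : vec) : dderiv a 0 = 0.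
Proof. by rewrite /dderiv big1 // => k _; rewrite mderiv0 scaler0. Qed.

Lemma dD (a : vec) f g : dderiv a (f + g) = dderiv a f + dderiv a g.
Proof. by rewrite /dderiv -big_split; apply: eq_bigr => k _; rewrite mderivD scalerDr. Qed.

Lemma dZ (a : vec) c f : dderiv a (c *: f) = c *: dderiv a f.
Proof.
rewrite /dderiv scaler_sumr; apply: eq_bigr => k _.
by rewrite mderivZ !scalerA mulrC.
Qed.

Lemma dB (a : vec) f g : dderiv a (f - g) = dderiv a f - dderiv a g.
Proof. by rewrite dD -scaleN1r dZ scaleN1r. Qed.

Lemma dM (a : vec) f g : dderiv a (f * g) = dderiv a f * g + f * dderiv a g.
Proof.
rewrite /dderiv mulr_suml mulr_sumr -big_split; apply: eq_bigr => k _.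
by rewrite mderivM scalerDr -scalerAl -scalerAr.
Qed.

Lemma d1 (a : vec) : dderiv a 1 = 0.
Proof. by rewrite /dderiv big1 // => k _; rewrite -mpolyC1 mderivC scaler0. Qed.

Lemma dX (a : vec) k : dderiv a 'X_k = a 0 k *: 1.
Proof.
rewrite /dderiv (bigD1 k) //= big1 ?addr0 => [|i ik].
  rewrite mderivX mnm1E eqxx scale1r.
  have -> : (U_(k) - U_(k))%MM = 0%MM.
    by apply/mnmP => j; rewrite mnmBE subnn mnm0E.
  by rewrite mpolyX0.
by rewrite mderivX mnm1E eq_sym (negbTE ik) scale0r scaler0.
Qed.

Lemma dlinp (a b : vec) : dderiv a (linp b) = dot b a *: 1.
Proof.
rewrite /linp (big_morph (dderiv a) (dD a) (d0 a)) /dot scaler_suml.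
by apply: eq_bigr => k _; rewrite dZ dX scalerA.
Qed.

Lemma dtau (a b : vec) f : dot a b = 0 ->
  dderiv a (comp_tau b f) = comp_tau b (dderiv a f).
Proof.
move=> ab; elim/mp_ind: f => [|c p Hp|p q Hp Hq|p q Hp Hq|k].
- by rewrite tau1 d1 /comp_tau comp_mpoly0.
- by rewrite tauZ !dZ Hp tauZ.
- by rewrite tauD !dD Hp Hq tauD.
- by rewrite tauM !dM Hp Hq tauD !tauM.
- rewrite tauX dB dZ dlinp dotC ab scale0r scaler0 subr0 dX.
  by rewrite tauZ tau1.
Qed.

Lemma rho_d (a b : vec) f : b != 0 -> dot a b = 0 ->
  dderiv a (rho b f) = rho b (dderiv a f).
Proof.
move=> b0 ab; have Hb0 := linp_neq0 _ b0.
apply: (cancelP _ _ _ Hb0).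
have E : linp b * dderiv a (rho b f) = dderiv a (linp b * rho b f).
  by rewrite dM dlinp dotC ab scale0r mul0r add0r.
rewrite [LHS]E [X in dderiv a X](rho_spec b f) [RHS](rho_spec b (dderiv a f)) [LHS]dB.
by rewrite [in LHS](dtau a b f ab).
Qed.
End S.

Theorem proposition3p1 (R : realFieldType) (N : nat) (Rs : seq 'rV[R]_N)
    (n : nat) (al : 'I_n -> 'rV[R]_N) :
  root_system Rs ->
  positive_orthogonal_subsystem Rs al ->
  (forall (i j : 'I_n) (f : {mpoly R[N]}),
      rho (al i) (rho (al j) f) - rho (al j) (rho (al i) f) = 0) /\
  (forall (i : 'I_n) (a : 'rV[R]_N) (f : {mpoly R[N]}),
      dot a (al i) = 0 ->
      dderiv a (rho (al i) f) - rho (al i) (dderiv a f) = 0).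
Proof.
move=> [H0 _ _] [inj [S [[[Hsub _ _] Horth] HS Hneg]]].
have inS : forall i, al i \in S by move=> i; apply/HS; left; exists i.
have nz : forall i, al i != 0.
  move=> i; apply/eqP => E; have := Hsub _ (inS i); rewrite E.
  by rewrite (negbTE H0).
split.
- move=> i j f; apply/eqP; rewrite subr_eq0; apply/eqP.
  have [->|ij] := eqVneq i j; first by [].
  apply: rho_comm; [exact: nz | exact: nz |].
  apply: Horth; [exact: inS | exact: inS | |].
    by apply/eqP => /inj E; move: ij; rewrite E eqxx.
  by apply/eqP; apply: Hneg.
- move=> i a f ha; apply/eqP; rewrite subr_eq0; apply/eqP.
  by apply: rho_d; [exact: nz | exact: ha].
Qed.
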